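(* Let $k\ge 0$ be an integer. Every maximal simplex $\sigma$ of $\mathrm{VR}(\mathbb{Z}^2;k)$ is of the form $\sigma=B_{\mathbb{R}^2}[c,\tfrac{k}{2}]\cap\mathbb{Z}^2$, where, for some $i,j\in\mathbb{Z}$, $c=(i,j)$ or $c=(i+\tfrac12,j+\tfrac12)$ if $k$ is even, and $c=(i+\tfrac12,j)$ or $c=(i,j+\tfrac12)$ if $k$ is odd.
   Context: $\mathbb{Z}^2$ and $\mathbb{R}^2$ carry the $l^1$ metric $d((x,y),(x',y'))=|x-x'|+|y-y'|$, and $B_{\mathbb{R}^2}[c,r]=\{p\in\mathbb{R}^2: d(p,c)\le r\}$ is the closed $l^1$ ball. $\mathrm{VR}(X;r)$ is the simplicial complex on vertex set $X$ whose simplices are the finite nonempty subsets of diameter at most $r$; a maximal simplex is one not properly contained in another simplex. *)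

(* Defs.v *)
From Stdlib Require Import ZArith Reals List.
Open Scope R_scope.

Definition pointZ := (Z * Z)%type.

Definition distZ (p q : pointZ) : Z :=
  (Z.abs (fst p - fst q) + Z.abs (snd p - snd q))%Z.

Definition distR (p q : R * R) : R :=
  Rabs (fst p - fst q) + Rabs (snd p - snd q).

Definition embZ (p : pointZ) : R * R := (IZR (fst p), IZR (snd p)).

Definition closed_ball (c : R * R) (r : R) (x : R * R) : Prop := distR x c <= r.

Definition finite_set (S : pointZ -> Prop) : Prop :=
  exists l : list pointZ, forall p, S p <-> In p l.

Definition VR_simplex (r : R) (S : pointZ -> Prop) : Prop :=
  finite_set S /\ (exists p, S p) /\
  (forall p q, S p -> S q -> IZR (distZ p q) <= r).

Definition VR_maximal_simplex (r : R) (S : pointZ -> Prop) : Prop :=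
  VR_simplex r S /\
  forall T, VR_simplex r T -> (forall p, S p -> T p) -> forall p, T p -> S p.

Definition is_ball_trace (S : pointZ -> Prop) (c : R * R) (r : R) : Prop :=
  forall p : pointZ, S p <-> closed_ball c r (embZ p).

(* Main.v *)
Require Import Defs.
From Stdlib Require Import ZArith Reals List Lra Lia.
Open Scope R_scope.

Lemma list_min (f : pointZ -> Z) (l : list pointZ) : l <> nil ->
  exists q, In q l /\ forall p, In p l -> (f q <= f p)%Z.
Proof.
  induction l as [|x l IH]; intros H; [congruence|].
  destruct l as [|y l'].
  - exists x; split; [left; auto|]. intros p [<-|[]]; lia.
  - destruct IH as [q [Hq Hm]]; [discriminate|].
    destruct (Z.le_gt_cases (f x) (f q)).
    + exists x; split; [left; auto|]. intros p [<-|Hp]; [lia|]. specialize (Hm p Hp); lia.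
    + exists q; split; [right; auto|]. intros p [<-|Hp]; [lia|]. auto.
Qed.

Lemma dist_le z k : IZR z <= INR k <-> (z <= Z.of_nat k)%Z.
Proof. rewrite INR_IZR_INZ; split; [apply le_IZR|apply IZR_le]. Qed.

Lemma box (k : nat) sigma : VR_maximal_simplex (INR k) sigma ->
  exists a b, forall p, sigma p <->
    (a <= fst p + snd p <= a + Z.of_nat k /\ b <= fst p - snd p <= b + Z.of_nat k)%Z.
Proof.
  intros [[[l Hl] [[p0 Hp0] Hd]] Hmax].
  assert (Hne : l <> nil) by (intro E; apply Hl in Hp0; rewrite E in Hp0; destruct Hp0).
  destruct (list_min (fun p => fst p + snd p)%Z l Hne) as [q1 [Hq1 Hm1]].
  destruct (list_min (fun p => fst p - snd p)%Z l Hne) as [q2 [Hq2 Hm2]].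
  exists (fst q1 + snd q1)%Z, (fst q2 - snd q2)%Z.
  assert (Fwd : forall p, sigma p ->
    ((fst q1 + snd q1) <= fst p + snd p <= (fst q1 + snd q1) + Z.of_nat k /\
     (fst q2 - snd q2) <= fst p - snd p <= (fst q2 - snd q2) + Z.of_nat k)%Z).
  { intros p Hp.
    pose proof (Hm1 p (proj1 (Hl p) Hp)). pose proof (Hm2 p (proj1 (Hl p) Hp)).
    simpl in *.
    pose proof (proj1 (dist_le _ _) (Hd p q1 Hp (proj2 (Hl q1) Hq1))).
    pose proof (proj1 (dist_le _ _) (Hd p q2 Hp (proj2 (Hl q2) Hq2))).
    unfold distZ in *. lia. }
  intros p; split; [apply Fwd|].
  intros Hb.
  apply (Hmax (fun q => sigma q \/ q = p)); [| intros; left; auto | right; auto].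
  split; [|split].
  - exists (p :: l). intros q; simpl; rewrite Hl; intuition.
  - exists p0; left; auto.
  - intros x y Hx Hy; apply dist_le.
    destruct Hx as [Hx|Ex]; destruct Hy as [Hy|Ey]; try subst x; try subst y.
    + apply dist_le; auto.
    + pose proof (Fwd x Hx); unfold distZ; lia.
    + pose proof (Fwd y Hy); unfold distZ; lia.
    + unfold distZ; lia.
Qed.

Lemma abs_half (X P : Z) : Rabs (IZR X - IZR P / 2) = IZR (Z.abs (2*X - P)) / 2.
Proof.
  rewrite abs_IZR, minus_IZR, mult_IZR.
  replace (IZR 2 * IZR X - IZR P) with (2 * (IZR X - IZR P / 2)) by field.
  rewrite Rabs_mult, (Rabs_right 2) by lra. field.
Qed.

Lemma trace_of (k : nat) sigma a b :
  (forall p, sigma p <->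
    (a <= fst p + snd p <= a + Z.of_nat k /\ b <= fst p - snd p <= b + Z.of_nat k)%Z) ->
  forall cx cy, cx = IZR (a + b + Z.of_nat k) / 2 -> cy = IZR (a - b) / 2 ->
  is_ball_trace sigma (cx, cy) (INR k / 2).
Proof.
  intros H cx cy -> -> p. rewrite H. unfold closed_ball, distR, embZ; simpl.
  rewrite !abs_half, INR_IZR_INZ.
  split; intros Hp.
  - assert (Z.abs (2 * fst p - (a + b + Z.of_nat k)) + Z.abs (2 * snd p - (a - b)) <= Z.of_nat k)%Z by lia.
    apply IZR_le in H0. rewrite plus_IZR in H0. lra.
  - assert (IZR (Z.abs (2 * fst p - (a + b + Z.of_nat k)) + Z.abs (2 * snd p - (a - b))) <= IZR (Z.of_nat k)).
    { rewrite plus_IZR; lra. }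
    apply le_IZR in H0. lia.
Qed.

Theorem proposition4p2 (k : nat) (sigma : pointZ -> Prop) :
  VR_maximal_simplex (INR k) sigma ->
  exists i j : Z,
    if Nat.even k then
      is_ball_trace sigma (IZR i, IZR j) (INR k / 2) \/
      is_ball_trace sigma (IZR i + 1/2, IZR j + 1/2) (INR k / 2)
    else
      is_ball_trace sigma (IZR i + 1/2, IZR j) (INR k / 2) \/
      is_ball_trace sigma (IZR i, IZR j + 1/2) (INR k / 2).
Proof.
  intros H. destruct (box k sigma H) as [a [b Hab]].
  pose proof (trace_of k sigma a b Hab) as T.
  destruct (Nat.Even_or_Odd k) as [[m Hm]|[m Hm]];
  destruct (Z.Even_or_Odd (a + b)) as [[t Ht]|[t Ht]].
  - assert (Nat.even k = true) as E by (subst; rewrite Nat.even_spec; exists m; reflexivity).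
    exists (t + Z.of_nat m)%Z, (t - b)%Z; rewrite E; left; apply T.
    + apply Rmult_eq_reg_r with 2; [|lra]. unfold Rdiv; rewrite Rmult_assoc, Rinv_l, Rmult_1_r by lra.
      rewrite <- mult_IZR; f_equal; lia.
    + apply Rmult_eq_reg_r with 2; [|lra]. unfold Rdiv; rewrite Rmult_assoc, Rinv_l, Rmult_1_r by lra.
      rewrite <- mult_IZR; f_equal; lia.
  - assert (Nat.even k = true) as E by (subst; rewrite Nat.even_spec; exists m; reflexivity).
    exists (t + Z.of_nat m)%Z, (t - b)%Z; rewrite E; right; apply T.
    + apply Rmult_eq_reg_r with 2; [|lra]. unfold Rdiv; rewrite Rmult_assoc, Rinv_l, Rmult_1_r by lra.
      rewrite Rmult_plus_distr_r, <- mult_IZR.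
      replace (a + b + Z.of_nat k)%Z with ((t + Z.of_nat m) * 2 + 1)%Z by lia.
      rewrite plus_IZR; lra.
    + apply Rmult_eq_reg_r with 2; [|lra]. unfold Rdiv; rewrite Rmult_assoc, Rinv_l, Rmult_1_r by lra.
      rewrite Rmult_plus_distr_r, <- mult_IZR.
      replace (a - b)%Z with ((t - b) * 2 + 1)%Z by lia.
      rewrite plus_IZR; lra.
  - assert (Nat.even k = false) as E by (subst; rewrite <- Nat.negb_odd, Bool.negb_false_iff, Nat.odd_spec; exists m; reflexivity).
    exists (t + Z.of_nat m)%Z, (t - b)%Z; rewrite E; left; apply T.
    + apply Rmult_eq_reg_r with 2; [|lra]. unfold Rdiv; rewrite Rmult_assoc, Rinv_l, Rmult_1_r by lra.
      rewrite Rmult_plus_distr_r, <- mult_IZR.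
      replace (a + b + Z.of_nat k)%Z with ((t + Z.of_nat m) * 2 + 1)%Z by lia.
      rewrite plus_IZR; lra.
    + apply Rmult_eq_reg_r with 2; [|lra]. unfold Rdiv; rewrite Rmult_assoc, Rinv_l, Rmult_1_r by lra.
      rewrite <- mult_IZR; f_equal; lia.
  - assert (Nat.even k = false) as E by (subst; rewrite <- Nat.negb_odd, Bool.negb_false_iff, Nat.odd_spec; exists m; reflexivity).
    exists (t + Z.of_nat m + 1)%Z, (t - b)%Z; rewrite E; right; apply T.
    + apply Rmult_eq_reg_r with 2; [|lra]. unfold Rdiv; rewrite Rmult_assoc, Rinv_l, Rmult_1_r by lra.
      rewrite <- mult_IZR; f_equal; lia.
    + apply Rmult_eq_reg_r with 2; [|lra]. unfold Rdiv; rewrite Rmult_assoc, Rinv_l, Rmult_1_r by lra.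
      rewrite Rmult_plus_distr_r, <- mult_IZR.
      replace (a - b)%Z with ((t - b) * 2 + 1)%Z by lia.
      rewrite plus_IZR; lra.
Qed.
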